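(* Let $k\ge0$, $n,q\ge1$, $\mathcal{X}\subset\mathbb{R}^n$ open, and let $\Psi\in C^0(\mathcal{X},\mathbb{R}^q)$ if $k=0$, or $\Psi\in C^k_b(\mathcal{X},\mathbb{R}^q)$ if $k\ge1$, be globally Lipschitz continuous with constant $K_\Psi\in[0,\infty)$. Fix $m\ge n+q$, $\tau\in[0,T]$, $w,\tilde w\in(0,\infty)$ and $K\in[0,\infty)$ with $$KT\ \ge\ \frac{K_\Psi}{w\tilde w}.$$ Then there exists an augmented neural DDE $\Phi\in\mathrm{NDDE}^k_\tau(\mathcal{X},\mathbb{R}^q)$ in dimension $m$ with $\Phi(x)=\Psi(x)$ for all $x\in\mathcal{X}$, whose vector field $F:\mathbb{R}\times\Omega_y\to\mathbb{R}^m$ is globally Lipschitz continuous in the second variable on $\mathbb{R}\times\Omega_0$ with constant $K$, where $\Omega_0=\{c_{\lambda(x)}:x\in\mathcal{X}\}\subset\Omega_y$, and whose weight matrices satisfy $\|W\|_\infty=w$, $\|\tilde W\|_\infty=\tilde w$.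
   Context: Throughout, $\|\cdot\|_\infty$ denotes the max-norm on $\mathbb{R}^d$ and, for a matrix $A\in\mathbb{R}^{r\times s}$, the induced norm $\|A\|_\infty=\max_{\|x\|_\infty=1}\|Ax\|_\infty$. Fix $T>0$, a delay $\tau\in[0,T]$ and $m\ge1$, and let $\mathcal{C}=C^0([-\tau,0],\mathbb{R}^m)$ with norm $\|u\|_\infty=\sup_{s\in[-\tau,0]}\|u(s)\|_\infty$. For a function $y$ defined on $[t-\tau,t]$, $y_t\in\mathcal{C}$ is $y_t(s)=y(t+s)$. For $a\in\mathbb{R}^m$, $c_a\in\mathcal{C}$ is the constant function $c_a(s)=a$. Given $F:\Omega\to\mathbb{R}^m$, $\Omega\subset\mathbb{R}\times\mathcal{C}$ open, and $(t_0,u)\in\Omega$, a solution of the DDE $\frac{dy}{dt}=F(t,y_t)$ ($t\ge t_0$), $y_{t_0}=u$, is a continuous $y:[t_0-\tau,t_0+c)\to\mathbb{R}^m$, $c\in(0,\infty]$, with $y_{t_0}=u$, $(t,y_t)\in\Omega$ and $y'(t)=F(t,y_t)$ for $t\in[t_0,t_0+c)$; it is denoted $y(t_0,u)$. $\mathcal{I}_a$ denotes the maximal interval of existence of $y(0,c_a)$. For $k\ge1$, $C^{0,k}_b(\Omega,\mathbb{R}^m)$ denotes the continuous maps $F$ on $\Omega$ that are $k$ times continuously Fréchet differentiable in the second variable with the derivatives of orders $1,\dots,k$ bounded on $\Omega$. Neural DDE: let $n,q\ge1$, $\mathcal{X}\subset\mathbb{R}^n$ open, $\lambda(x)=Wx+b$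 with $W\in\mathbb{R}^{m\times n}$, $b\in\mathbb{R}^m$, $\tilde\lambda(y)=\tilde Wy+\tilde b$ with $\tilde W\in\mathbb{R}^{q\times m}$, $\tilde b\in\mathbb{R}^q$, and $F:\Omega_t\times\Omega_y\to\mathbb{R}^m$ with $\Omega_t\subset\mathbb{R}$, $\Omega_y\subset\mathcal{C}$ open, satisfying the well-definedness conditions: $[0,T]\subset\Omega_t$, $\Omega_0:=\{c_{\lambda(x)}:x\in\mathcal{X}\}\subset\Omega_y$, and $[-\tau,T]\subset\mathcal{I}_{\lambda(x)}$ for all $x\in\mathcal{X}$. The associated neural DDE is $\Phi:\mathcal{X}\to\mathbb{R}^q$, $\Phi(x)=\tilde\lambda(y(0,c_{\lambda(x)})(T))$. For $k\ge1$, $\mathrm{NDDE}^k_\tau(\mathcal{X},\mathbb{R}^q)$ is the set of all such $\Phi$ with $F\in C^{0,k}_b(\Omega_t\times\Omega_y,\mathbb{R}^m)$; $\mathrm{NDDE}^0_\tau(\mathcal{X},\mathbb{R}^q)$ is the set of all such $\Phi$ for which the solutions $y(0,c_{\lambda(x)})$ are unique and continuous (and $\Phi$ is continuous). $\Phi$ is non-augmented if $m\le\max\{n,q\}$ and augmented if $m>\max\{n,q\}$. $C^k_b(\mathcal{X},\mathbb{R}^q)$ denotes the $k$ times continuously differentiable maps whose derivatives of orders $1,\dots,k$ are bounded on $\mathcal{X}$. Global Lipschitz continuity of $F$ in the second variable on $\mathbb{R}\times\Omega_0$ with constant $K$ means $\|F(t,u)-F(t,v)\|_\infty\le K\|u-v\|_\infty$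 for all $t\in\mathbb{R}$, $u,v\in\Omega_0$. *)

(* Defs.v *)
(* R : realType, vectors in R^d are column vectors 'cV[R]_d,
   whose MathComp-Analysis norm `|.| is the max-norm. *)
From HB Require Import structures.
From mathcomp Require Import all_boot all_order all_algebra.
From mathcomp Require Import all_classical all_reals all_analysis.
Set Implicit Arguments. Unset Strict Implicit. Unset Printing Implicit Defensive.
Import Order.TTheory GRing.Theory Num.Theory.
Import numFieldNormedType.Exports.
Local Open Scope classical_set_scope.
Local Open Scope ring_scope.

Section Defs.
Variable R : realType.

Definition opnorm (r s : nat) (A : 'M[R]_(r, s)) : R :=
  sup [set `|A *m x| | x in [set x : 'cV[R]_s | `|x| = 1]].

(** The phase space C = C^0([-tau,0], R^m).  An element u of C is represented by
    its canonical extension to R, constant on (-oo,-tau] and on [0,+oo):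
    u s = u (clamp tau s).  This is a bijective representation. *)
Definition clamp (tau s : R) : R := Num.max (- tau) (Num.min s 0).

Definition Cspace (tau : R) (m : nat) : set (R -> 'cV[R]_m) :=
  [set u | continuous u /\ forall s, u s = u (clamp tau s)].

Arguments Cspace (tau m) : clear implicits.

Definition normC (tau : R) (m : nat) (u : R -> 'cV[R]_m) : R :=
  sup [set `|u s| | s in [set s | - tau <= s <= 0]].

Arguments normC tau {m} u.

Definition seg (tau : R) (m : nat) (y : R -> 'cV[R]_m) (t : R) : R -> 'cV[R]_m :=
  fun s => y (t + clamp tau s).

Definition cstC (m : nat) (a : 'cV[R]_m) : R -> 'cV[R]_m := fun _ => a.

Definition openC (tau : R) (m : nat) (O : set (R -> 'cV[R]_m)) : Prop :=
  O `<=` Cspace tau m /\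
  forall u, O u -> exists2 r : R, 0 < r &
    forall v, Cspace tau m v -> normC tau (v - u) < r -> O v.

(** * C^{0,k}_b : continuous maps F on Om, k times continuously Frechet
   differentiable in the second variable, derivatives of orders 1..k bounded on Om.
   The second variable lives in an ambient set S of an lmodType V with norm nV;
   D j t u is the j-th Frechet derivative in u, a j-linear map on S^j
   (arguments hs 0, ..., hs (j-1)). Operator norms are expressed by the
   usual bound |L hs| <= M * prod_i nV (hs i). *)
Definition upd (V : Type) (hs : nat -> V) (i : nat) (x : V) : nat -> V :=
  fun l => if l == i then x else hs l.

Definition ncons (V : Type) (h : V) (hs : nat -> V) : nat -> V :=
  fun l => if l is l'.+1 then hs l' else h.

Definition Ck0b (V : lmodType R) (nV : V -> R) (S : set V) (p : nat) (k : nat)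
    (Om : set (R * V)) (F : R -> V -> 'cV[R]_p) : Prop :=
  exists D : nat -> R -> V -> (nat -> V) -> 'cV[R]_p,
  [/\
      (forall t u hs, Om (t, u) -> D 0%N t u hs = F t u),
      (forall j t u, (j <= k)%N -> Om (t, u) ->
         (forall hs hs', (forall i, (i < j)%N -> hs i = hs' i) -> D j t u hs = D j t u hs') /\
         (forall hs i a x y, (i < j)%N -> (forall l, S (hs l)) -> S x -> S y ->
            D j t u (upd hs i (a *: x + y)) = a *: D j t u (upd hs i x) + D j t u (upd hs i y))),
      (forall j t u, (j < k)%N -> Om (t, u) -> forall e : R, 0 < e ->
         exists2 d : R, 0 < d & forall h, S h -> nV h < d -> Om (t, u + h) ->
           forall hs, (forall l, S (hs l)) ->
             `|D j t (u + h) hs - D j t u hs - D j.+1 t u (ncons h hs)|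
               <= e * nV h * \prod_(i < j) nV (hs i)),
      (forall j t u, (j <= k)%N -> Om (t, u) -> forall e : R, 0 < e ->
         exists2 d : R, 0 < d & forall s v, Om (s, v) -> `|s - t| < d -> nV (v - u) < d ->
           forall hs, (forall l, S (hs l)) ->
             `|D j s v hs - D j t u hs| <= e * \prod_(i < j) nV (hs i)) &
      (forall j, (1 <= j <= k)%N -> exists M : R, forall t u hs, Om (t, u) ->
         (forall l, S (hs l)) -> `|D j t u hs| <= M * \prod_(i < j) nV (hs i))].

Definition Ckb (n q k : nat) (X : set 'cV[R]_n) (Psi : 'cV[R]_n -> 'cV[R]_q) : Prop :=
  @Ck0b 'cV[R]_n (fun x => `|x|) setT q k [set p | X p.2] (fun _ => Psi).

(** * Solutions of dy/dt = F(t, y_t), t >= 0, y_0 = u, on [-tau, c), c in (0, +oo]. *)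
Definition is_sol (tau : R) (m : nat) (Omt : set R) (Omy : set (R -> 'cV[R]_m))
    (F : R -> (R -> 'cV[R]_m) -> 'cV[R]_m) (u : R -> 'cV[R]_m) (c : \bar R)
    (y : R -> 'cV[R]_m) : Prop :=
  [/\ (0 < c)%E,
      (forall t, - tau <= t -> (t%:E < c)%E -> forall e : R, 0 < e ->
         exists2 d : R, 0 < d & forall s, - tau <= s -> (s%:E < c)%E -> `|s - t| < d ->
           `|y s - y t| < e),
      (forall s, - tau <= s <= 0 -> y s = u s),
      (forall t, 0 <= t -> (t%:E < c)%E -> Omt t /\ Omy (seg tau y t) ) &
      (forall t, 0 <= t -> (t%:E < c)%E -> forall e : R, 0 < e ->
         exists2 d : R, 0 < d & forall h, h != 0 -> `|h| < d -> 0 <= t + h ->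
           ((t + h)%:E < c)%E ->
           `|h^-1 *: (y (t + h) - y t) - F t (seg tau y t)| <= e)].

Definition is_NDDE (k n m q : nat) (tau T : R) (X : set 'cV[R]_n)
    (Omt : set R) (Omy : set (R -> 'cV[R]_m)) (F : R -> (R -> 'cV[R]_m) -> 'cV[R]_m)
    (W : 'M[R]_(m, n)) (b : 'cV[R]_m) (Wt : 'M[R]_(q, m)) (bt : 'cV[R]_q)
    (Phi : 'cV[R]_n -> 'cV[R]_q) : Prop :=
  let lam := fun x : 'cV[R]_n => W *m x + b in
  [/\ open Omt /\ openC tau Omy,
      [set t | 0 <= t <= T] `<=` Omt,
      (forall x, X x -> Omy (cstC (lam x))),
      (forall x, X x -> exists c : \bar R, exists y, (T%:E < c)%E /\
         is_sol tau Omt Omy F (cstC (lam x)) c y /\ Phi x = Wt *m y T + bt) &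
      (if k == 0%N then
         (forall x, X x -> forall c1 y1 c2 y2,
            is_sol tau Omt Omy F (cstC (lam x)) c1 y1 ->
            is_sol tau Omt Omy F (cstC (lam x)) c2 y2 ->
            forall t, - tau <= t -> (t%:E < c1)%E -> (t%:E < c2)%E -> y1 t = y2 t) /\
         {within X, continuous Phi}
       else
         @Ck0b (R -> 'cV[R]_m) (@normC tau m) (Cspace tau m) m k
               [set p | Omt p.1 /\ Omy p.2] F)].

End Defs.

(* Main.v *)
Require Import Defs.
From HB Require Import structures.
From mathcomp Require Import all_boot all_order all_algebra.
From mathcomp Require Import all_classical all_reals all_analysis.
From mathcomp Require Import lra ring.
Import Order.TTheory GRing.Theory Num.Theory.
Import numFieldNormedType.Exports.
Local Open Scope classical_set_scope.
Local Open Scope ring_scope.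

Section Helpers.
Variable R : realType.
Lemma mxn_ge p r (x : 'M[R]_(p,r)) i j : `|x i j| <= `|x|.
Proof.
change (`|x|) with (mx_norm x). rewrite mx_normrE.
exact: (Order.TotalTheory.le_bigmax _ (fun ij : _ * _ => `|x ij.1 ij.2|) (i,j)).
Qed.
Lemma mxn_le p r (x : 'M[R]_(p,r)) M : 0 <= M -> (forall i j, `|x i j| <= M) -> `|x| <= M.
Proof.
move=> M0 H.
change (`|x|) with (mx_norm x). rewrite mx_normrE.
apply: Order.POrderTheory.bigmax_le => // -[i j] _; exact: H.
Qed.

Lemma max_lip (c a b : R) : `|Num.max c a - Num.max c b| <= `|a - b|.
Proof.
case: (leP c a) => ha; case: (leP c b) => hb; rewrite ?subrr ?normr0 //.
- rewrite !ger0_norm; lra.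
- rewrite ler0_norm ?ler0_norm; lra.
Qed.
Lemma min_lip (c a b : R) : `|Num.min c a - Num.min c b| <= `|a - b|.
Proof.
case: (leP c a) => ha; case: (leP c b) => hb; rewrite ?subrr ?normr0 //.
- rewrite !ger0_norm; lra.
- rewrite !ler0_norm; lra.
Qed.
Lemma lip_cont p (f : R -> 'cV[R]_p) M : (forall s t, `|f s - f t| <= M * `|s - t|) -> continuous f.
Proof.
move=> H x; apply/cvgrPdist_lt => e e0.
have M1 : 0 < `|M| + 1 by rewrite ltr_wpDl.
near=> y.
apply: (le_lt_trans (H x y)).
have hM : M <= `|M| + 1 by have := ler_norm M; lra.
apply: (le_lt_trans (ler_wpM2r (normr_ge0 _) hM)).
rewrite -ltr_pdivlMl //.
near: y. apply: cvgr_dist_lt => //. by rewrite mulr_gt0 // invr_gt0.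
Unshelve. all: by end_near.
Qed.

Lemma normC_ge (tau : R) p (u : R -> 'cV[R]_p) s : 0 <= tau -> continuous u ->
  - tau <= s <= 0 -> `|u s| <= normC tau u.
Proof.
move=> t0 cu hs.
have [c _ hc] : exists2 c : R, c \in `[- tau, 0] & forall t, t \in `[- tau, 0] -> `|u t| <= `|u c|.
  apply: EVT_max; first by rewrite lerNl oppr0.
  apply: continuous_subspaceT => x.
  apply: continuous_comp; first exact: cu.
  exact: norm_continuous.
apply: ub_le_sup; last by exists s.
exists `|u c| => _ [t ht <-]; apply: hc.
by rewrite in_itv.
Qed.

Lemma ltc_trans (a b : R) (c : \bar R) : a <= b -> (b%:E < c)%E -> (a%:E < c)%E.
Proof. by move=> ab; apply: le_lt_trans; rewrite lee_fin. Qed.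

Lemma zero_rderiv p (g : R -> 'cV[R]_p) (c : \bar R) :
 (forall t, 0 <= t -> (t%:E < c)%E -> forall e, 0 < e -> exists2 d, 0 < d &
    forall s, 0 <= s -> (s%:E < c)%E -> `|s - t| < d -> `|g s - g t| < e) ->
 (forall t, 0 <= t -> (t%:E < c)%E -> forall e, 0 < e -> exists2 d, 0 < d &
    forall h, 0 < h -> h < d -> ((t+h)%:E < c)%E -> `|g (t + h) - g t| <= e * h) ->
 forall t, 0 <= t -> (t%:E < c)%E -> g t = g 0.
Proof.
move=> gc gd t t0 tc.
suff H : forall e, 0 < e -> `|g t - g 0| <= e * t.
  apply/eqP; rewrite -subr_eq0 -normr_le0; apply/ler_addgt0Pr => eta eta0.
  rewrite add0r; apply: (le_trans (H (eta / (t + 1)) _)); last first.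
    rewrite mulrAC ler_pdivrMr ?ltr_wpDl //; nra.
  by rewrite divr_gt0 // ltr_wpDl.
move=> e e0.
pose A := [set s | 0 <= s <= t /\ forall r, 0 <= r <= s -> `|g r - g 0| <= e * r].
have A0 : A 0.
  split; first by rewrite lexx t0.
  move=> r /andP[r0 r0']; have -> : r = 0 by apply/eqP; rewrite eq_le r0 r0'.
  by rewrite subrr normr0 mulr0.
have hsA : has_sup A.
  split; first by exists 0.
  by exists t => s [/andP[_ ]].
set S := sup A.
have S0 : 0 <= S by apply: sup_upper_bound.
have St : S <= t by apply: ge_sup; [exists 0 | move=> s [/andP[_]]].
have Sc : (S%:E < c)%E by apply: ltc_trans tc.
have P1 : forall r, 0 <= r -> r < S -> `|g r - g 0| <= e * r.
  move=> r r0 rS.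
  have rS' : 0 < S - r by rewrite subr_gt0.
  have [a [_ Ha] ra] := sup_adherent rS' hsA.
  apply: Ha; rewrite r0 /=; rewrite -/S in ra; lra.
have P2 : `|g S - g 0| <= e * S.
  apply/ler_addgt0Pr => eta eta0.
  have [d d0 Hd] := gc S S0 Sc eta eta0.
  have [a [] a0t Ha ra] := sup_adherent d0 hsA.
  have a0 : 0 <= a by case/andP: a0t.
  have aS : a <= S by apply: sup_upper_bound.
  have h1 : `|g a - g S| < eta.
    apply: Hd => //; first exact: ltc_trans Sc.
    rewrite ler0_norm; rewrite -/S in ra; lra.
  have h2 := Ha a (introT andP (conj a0 (lexx a))).
  have := ler_normD (g S - g a) (g a - g 0).
  rewrite [`|g S - g a|]distrC.
  have -> : g S - g a + (g a - g 0) = g S - g 0 by rewrite addrA subrK.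
  have : e * a <= e * S by rewrite ler_pM2l.
  lra.
have SA : A S.
  split; first by rewrite S0 St.
  move=> r /andP[r0 rS]; case: (ltrP r S) => h; first exact: P1.
  by have -> : r = S by apply/eqP; rewrite eq_le rS h.
case: (ltrP S t) => hSt; last first.
  have -> : t = S by apply/eqP; rewrite eq_le hSt St.
  exact: P2.
exfalso.
have [d d0 Hd] := gd S S0 Sc e e0.
pose h := Num.min (d / 2) (t - S).
have h0 : 0 < h by rewrite lt_min divr_gt0 // subr_gt0.
have hd : h < d by rewrite /h gt_min ltr_pdivrMr //; lra.
have htS : h <= t - S by rewrite /h ge_min lexx orbT.
have : A (S + h).
  split; first by apply/andP; split; lra.
  move=> r /andP[r0 rSh]; case: (lerP r S) => rS.
    by case: SA => _; apply; rewrite r0.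
  have rd : r - S < d by lra.
  have rS0 : 0 < r - S by lra.
  have rt : r <= t by lra.
  have := Hd (r - S) rS0 rd.
  rewrite (_ : S + (r - S) = r); last by rewrite addrC subrK.
  move=> /(_ (ltc_trans _ _ _ rt tc)) H.
  have := ler_normD (g r - g S) (g S - g 0).
  have -> : g r - g S + (g S - g 0) = g r - g 0 by rewrite addrA subrK.
  lra.
move=> SAh; have := sup_upper_bound hsA SAh; rewrite -/S; lra.
Qed.

Lemma sel_sum_eq p (P : pred 'I_p) (f : 'I_p -> R) j0 : P j0 -> (forall j, P j -> j = j0) ->
  \sum_j (P j)%:R * f j = f j0.
Proof.
move=> Pj0 u; rewrite (bigD1 j0) //= Pj0 mul1r big1 ?addr0 // => j /negbTE jn.
case Pj: (P j); last by rewrite mul0r.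
by rewrite (u j Pj) eqxx in jn.
Qed.
Lemma sel_sum_0 p (P : pred 'I_p) (f : 'I_p -> R) : (forall j, ~~ P j) ->
  \sum_j (P j)%:R * f j = 0.
Proof. by move=> H; rewrite big1 // => j _; rewrite (negbTE (H j)) mul0r. Qed.
Lemma sel_norm p r s (P : 'I_r -> pred 'I_p) (y : 'M[R]_(p, s)) :
  (forall i j j', P i j -> P i j' -> j = j') ->
  `|(\matrix_(i, j) (P i j)%:R : 'M[R]_(r,p)) *m y| <= `|y|.
Proof.
move=> u; apply: mxn_le => // i k; rewrite !mxE.
under eq_bigr do rewrite mxE.
case: (pickP (P i)) => [j0 Pj0 | P0].
  rewrite (@sel_sum_eq _ (P i) (fun j => y j k) j0 Pj0) ?mxn_ge // => j Pj; exact: u Pj Pj0.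
by rewrite (@sel_sum_0 _ (P i)) ?normr0 // => j; rewrite P0.
Qed.

End Helpers.

Definition Qm (R : realType) n m : 'M[R]_(n,m) := \matrix_(i,j) ((j:nat) == i)%:R.
Definition Pm (R : realType) n q m : 'M[R]_(m,q) := \matrix_(i,j) ((i:nat) == (n + j)%N)%:R.

Section Mats.
Variables (R : realType) (n q m : nat).
Lemma QQ : (n <= m)%N -> Qm R n m *m (Qm R n m)^T = 1%:M.
Proof.
move=> hnm; apply/matrixP => i k; rewrite !mxE.
under eq_bigr do rewrite !mxE.
rewrite (@sel_sum_eq R _ (fun j : 'I_m => (j:nat) == i) (fun j : 'I_m => ((j:nat) == k)%:R) (widen_ord hnm i)) //=.
by move=> j /eqP ji; apply: val_inj.
Qed.
Lemma PP : (n + q <= m)%N -> (Pm R n q m)^T *m Pm R n q m = 1%:M.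
Proof.
move=> hm; apply/matrixP => i k; rewrite !mxE.
under eq_bigr do rewrite !mxE.
have him : (n + i < m)%N by apply: leq_trans hm; rewrite ltn_add2l.
rewrite (@sel_sum_eq R _ (fun j : 'I_m => (j:nat) == (n + i)%N) (fun j : 'I_m => ((j:nat) == (n + k)%N)%:R) (Ordinal him)) //=.
  by rewrite eqn_add2l.
by move=> j /eqP ji; apply: val_inj.
Qed.
Lemma PQ : (Pm R n q m)^T *m (Qm R n m)^T = 0.
Proof.
apply/matrixP => i k; rewrite !mxE big1 // => j _; rewrite !mxE.
case: eqP => [->|]; last by rewrite mul0r.
case: eqP => [h|]; last by rewrite mulr0.
by have := ltn_ord k; rewrite -h -{2}(addn0 n) ltn_add2l.
Qed.
Lemma QP : Qm R n m *m Pm R n q m = 0.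
Proof.
apply/matrixP => i k; rewrite !mxE big1 // => j _; rewrite !mxE.
case: eqP => [->|]; last by rewrite mul0r.
case: eqP => [h|]; last by rewrite mulr0.
by have := ltn_ord i; rewrite h -{2}(addn0 n) ltn_add2l.
Qed.
Lemma Qn p (y : 'M[R]_(m,p)) : `|Qm R n m *m y| <= `|y|.
Proof. by apply: sel_norm => i j j' /eqP h /eqP h'; apply: val_inj => /=; rewrite h h'. Qed.
Lemma QTn p (y : 'M[R]_(n,p)) : `|(Qm R n m)^T *m y| <= `|y|.
Proof.
have -> : (Qm R n m)^T = \matrix_(i, j) ((i:nat) == j)%:R by apply/matrixP => i j; rewrite !mxE.
by apply: sel_norm => i j j' /eqP h /eqP h'; apply: val_inj => /=; rewrite -h -h'.
Qed.
Lemma Pn p (y : 'M[R]_(q,p)) : `|Pm R n q m *m y| <= `|y|.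
Proof.
apply: sel_norm => i j j' /eqP h /eqP h'; apply: val_inj.
by apply/eqP; rewrite -(eqn_add2l n) -h -h'.
Qed.
Lemma PTn p (y : 'M[R]_(m,p)) : `|(Pm R n q m)^T *m y| <= `|y|.
Proof.
have -> : (Pm R n q m)^T = \matrix_(i, j) ((j:nat) == (n + i)%N)%:R by apply/matrixP => i j; rewrite !mxE.
by apply: sel_norm => i j j' /eqP h /eqP h'; apply: val_inj => /=; rewrite h h'.
Qed.
End Mats.

Lemma lip_within_cont (R : realType) n q (X : set 'cV[R]_n) (f : 'cV[R]_n -> 'cV[R]_q) M :
  (forall x y, X x -> X y -> `|f x - f y| <= M * `|x - y|) -> {within X, continuous f}.
Proof.
move=> H; apply/subspace_continuousP => x Xx; apply/cvgrPdist_lt => e e0.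
have M1 : 0 < `|M| + 1 by rewrite ltr_wpDl.
rewrite near_withinE; near=> y => Xy.
apply: (le_lt_trans (H x y Xx Xy)).
have hM : M <= `|M| + 1 by have := ler_norm M; lra.
apply: (le_lt_trans (ler_wpM2r (normr_ge0 _) hM)).
rewrite -ltr_pdivlMl //.
near: y. apply: cvgr_dist_lt => //. by rewrite mulr_gt0 // invr_gt0.
Unshelve. all: by end_near.
Qed.

Section Clamp.
Variable R : realType.
Lemma clamp_in (tau : R) s : - tau <= s <= 0 -> clamp tau s = s.
Proof. by case/andP => h1 h2; rewrite /clamp (min_l h2) (max_r h1). Qed.
Lemma clamp_ge (tau : R) s : 0 <= tau -> - tau <= clamp tau s <= 0.
Proof.
move=> t0; rewrite /clamp le_max lexx /= ge_max ge_min lexx orbT andbT.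
by rewrite lerNl oppr0.
Qed.
Lemma clamp_id (tau : R) s : 0 <= tau -> clamp tau (clamp tau s) = clamp tau s.
Proof. by move=> t0; rewrite clamp_in // clamp_ge. Qed.
Lemma clamp0 (tau : R) : 0 <= tau -> clamp tau 0 = 0.
Proof. by move=> t0; apply: clamp_in; rewrite lexx andbT lerNl oppr0. Qed.
Lemma clamp_lip (tau : R) s s' : `|clamp tau s - clamp tau s'| <= `|s - s'|.
Proof. rewrite /clamp; apply: (le_trans (max_lip _ _ _ _)); rewrite (minC s) (minC s'); exact: min_lip. Qed.
End Clamp.

Lemma prod_le (R : realType) j (a c : nat -> R) (b : R) :
  (forall i, (i < j)%N -> 0 <= a i <= b * c i) ->
  \prod_(i < j) a i <= b ^+ j * \prod_(i < j) c i.
Proof.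
move=> H.
have -> : b ^+ j * \prod_(i < j) c i = \prod_(i < j) (b * c i).
  by rewrite big_split /= prodr_const card_ord.
by apply: ler_prod => i _; apply: H.
Qed.

Lemma swap_sub (V : zmodType) (a b c d : V) : (a - b) - (c - d) = (a - c) - (b - d).
Proof. by rewrite !opprB addrACA [in RHS]addrACA [_ + - b]addrC. Qed.

Lemma norm_one (R : realType) p (hp : (0 < p)%N) : `|(const_mx 1 : 'cV[R]_p)| = 1.
Proof.
apply/le_anti/andP; split.
  by apply: mxn_le => // i j; rewrite mxE normr1.
by have := @mxn_ge R _ _ (const_mx 1 : 'cV[R]_p) (Ordinal hp) ord0; rewrite mxE normr1.
Qed.

Theorem mainTheorem5 (R : realType) (k n q m : nat) (hn : (0 < n)%N) (hq : (0 < q)%N)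
    (X : set 'cV[R]_n) (hX : open X)
    (Psi : 'cV[R]_n -> 'cV[R]_q) (hPsi : Ckb k X Psi)
    (KPsi : R) (hKPsi : 0 <= KPsi)
    (hLip : forall x y, X x -> X y -> `|Psi x - Psi y| <= KPsi * `|x - y|)
    (hm : (n + q <= m)%N)
    (T tau : R) (hT : 0 < T) (htau0 : 0 <= tau) (htauT : tau <= T)
    (w wt K : R) (hw : 0 < w) (hwt : 0 < wt) (hK : 0 <= K)
    (hKT : KPsi / (w * wt) <= K * T) :
  exists (Omy : set (R -> 'cV[R]_m)) (F : R -> (R -> 'cV[R]_m) -> 'cV[R]_m)
         (W : 'M[R]_(m, n)) (b : 'cV[R]_m) (Wt : 'M[R]_(q, m)) (bt : 'cV[R]_q),
    [/\ is_NDDE k tau T X setT Omy F W b Wt bt Psi,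
        (* global Lipschitz continuity in the 2nd variable on R x Omega_0 *)
        (forall t u v,
           (exists2 x, X x & u = cstC (W *m x + b)) ->
           (exists2 x, X x & v = cstC (W *m x + b)) ->
           `|F t u - F t v| <= K * normC tau (u - v)),
        opnorm W = w &
        opnorm Wt = wt].
Proof.
have hnm : (n <= m)%N by apply: leq_trans hm; rewrite leq_addr.
set Q := Qm R n m. set P := Pm R n q m.
pose c := (T * wt)^-1.
have c0 : 0 < c by rewrite invr_gt0 mulr_gt0.
pose L := fun u : R -> 'cV[R]_m => w^-1 *: (Q *m u 0).
pose E := fun z : 'cV[R]_q => c *: (P *m z).
pose F := fun (t : R) (u : R -> 'cV[R]_m) => E (Psi (L u)).
pose W := w *: Q^T. pose Wt := wt *: P^T.
pose Omy := [set u : R -> 'cV[R]_m | Cspace tau u /\ X (L u)].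
have hQE : forall z, Q *m E z = 0.
  by move=> z; rewrite /E -scalemxAr mulmxA QP mul0mx scaler0.
have hLv : forall (u : R -> 'cV[R]_m) x a z, u 0 = W *m x + 0 + a *: E z -> L u = x.
  move=> u x a z hu; rewrite /L hu addr0 mulmxDr -scalemxAr hQE scaler0 addr0.
  rewrite /W -scalemxAl -scalemxAr mulmxA QQ // mul1mx scalerA mulVf ?scale1r //.
  by rewrite gt_eqF.
have hWtW : forall x : 'cV[R]_n, Wt *m (W *m x) = 0.
  by move=> x; rewrite /Wt /W -!scalemxAl -!scalemxAr mulmxA PQ mul0mx !scaler0.
have hWtE : forall z, Wt *m E z = T^-1 *: z.
  move=> z; rewrite /Wt /E -scalemxAl -scalemxAr mulmxA PP // mul1mx scalerA.
  by rewrite /c invfM mulrCA mulfV ?mulr1 // gt_eqF.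
have nE : forall z, `|E z| <= c * `|z|.
  by move=> z; rewrite /E mx_normZ gtr0_norm //; apply: ler_wpM2l; [exact: ltW | exact: Pn].
have nWx : forall x : 'cV[R]_n, `|W *m x| = w * `|x|.
  move=> x; rewrite /W -scalemxAl mx_normZ gtr0_norm //; congr (_ * _).
  apply/le_anti/andP; split; first exact: QTn.
  by rewrite -{1}(mul1mx x) -(@QQ R n m hnm) -mulmxA; apply: Qn.
have nL : forall h : R -> 'cV[R]_m, continuous h -> `|L h| <= w^-1 * normC tau h.
  move=> h ch; rewrite /L mx_normZ gtr0_norm ?invr_gt0 //.
  apply: ler_wpM2l; first by rewrite invr_ge0 ltW.
  apply: (le_trans (Qn _ _ _ _ _)); apply: normC_ge => //.
  by rewrite lexx andbT lerNl oppr0.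
have hLc : forall x, L (cstC (W *m x + 0)) = x.
  move=> x0; apply: (hLv _ x0 0 0). by rewrite scale0r !addr0.
exists Omy, F, W, 0, Wt, 0; split.
- rewrite /is_NDDE /=; split.
  + split; first exact: openT.
    split; first by move=> u [].
    move=> u [Cu Xu].
    have : nbhs (L u) X by apply: open_nbhs_nbhs; split.
    move=> /nbhs_ballP [r r0 hr].
    exists (r * w); first by rewrite mulr_gt0.
    move=> v Cv hvu; split => //; apply: hr.
    rewrite mx_norm_ball /ball_ /= distrC.
    have -> : L v - L u = L (v - u) by rewrite /L -scalerBr -mulmxBr.
    have cvu : continuous (v - u) by move=> s; apply: continuousB; [apply: Cv.1 | apply: Cu.1].
    apply: (le_lt_trans (nL _ cvu)).
    by rewrite mulrC ltr_pdivrMr.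
  + by [].
  + move=> x Xx; split; last by rewrite hLc.
    by split; [exact: cst_continuous | by []].
  + move=> x Xx.
    pose v := E (Psi x).
    pose y := fun s => W *m x + 0 + Num.max 0 s *: v.
    have dy : forall s t, y s - y t = (Num.max 0 s - Num.max 0 t) *: v.
      by move=> s t; rewrite /y opprD addrACA subrr add0r -scalerBl.
    have hLs : forall t, L (seg tau y t) = x.
      by move=> t; apply: (hLv _ x (Num.max 0 (t + clamp tau 0)) (Psi x)).
    exists +oo%E, y; split; first exact: ltry.
    split; last first.
      rewrite /y max_r ?ltW // !mulmxDr hWtW mulmx0 add0r addr0 -scalemxAr hWtE.
      rewrite scalerA mulfV ?scale1r ?add0r //; by rewrite gt_eqF.
    split.
    * exact: lt0y.
    * move=> t _ _ e e0.
      have v1 : 0 < `|v| + 1 by rewrite ltr_wpDl.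
      exists (e / (`|v| + 1)); first by rewrite divr_gt0.
      move=> s _ _ hst; rewrite dy mx_normZ.
      have := max_lip R 0 s t.
      rewrite ltr_pdivlMr // in hst.
      have := normr_ge0 (Num.max 0 s - Num.max 0 t).
      have := normr_ge0 v.
      nra.
    * by move=> s /andP[_ s0]; rewrite /y /cstC max_l // scale0r addr0.
    * move=> t t0 _; split => //; split; last by rewrite hLs.
      split; last by move=> s; rewrite /seg clamp_id.
      apply: (@lip_cont R m _ `|v|) => s s'.
      rewrite /seg dy mx_normZ mulrC ler_wpM2l //.
      apply: (le_trans (max_lip R 0 _ _)).
      by rewrite opprD addrACA subrr add0r clamp_lip.
    * move=> t t0 _ e e0; exists 1 => // h hn0 _ th _.
      rewrite /F hLs -/v dy max_r // max_r // addrAC subrr add0r scalerA mulVf //.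
      by rewrite scale1r subrr normr0 ltW.
  + case: k hPsi => [|k] hPsi /=.
    * split; last by apply: (lip_within_cont _ _ _ _ _ _ hLip).
      move=> x Xx c1 y1 c2 y2 s1 s2 t tt tc1 tc2.
      suff key : forall cc y, is_sol tau setT Omy F (cstC (W *m x + 0)) cc y ->
          forall t, - tau <= t -> (t%:E < cc)%E -> y t = W *m x + 0 + Num.max 0 t *: E (Psi x).
        by rewrite (key _ _ s1) // (key _ _ s2).
      move=> cc y [_ yc yinit yOm yd] {tt tc1 tc2 s1 s2} t tt tc.
      have mt0 : - tau <= 0 by rewrite lerNl oppr0.
      case: (leP t 0) => ht.
        rewrite yinit; first by rewrite /cstC ?max_l ?scale0r ?addr0.
        by rewrite tt ht.
      have y0 : y 0 = W *m x + 0 by rewrite yinit // lexx andbT.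
      have top : forall s, 0 <= s -> (s%:E < cc)%E -> Q *m y s = Q *m y 0.
        move=> s s0 sc; apply: (@zero_rderiv R n (fun s => Q *m y s) cc) => //.
          move=> t0 t00 t0c e e0.
          have [d d0 hd] := yc t0 (le_trans mt0 t00) t0c e e0.
          exists d => // s' s0' sc' hs; rewrite -mulmxBr.
          apply: le_lt_trans (Qn _ _ _ _ _) _; apply: hd => //; exact: le_trans mt0 s0'.
        move=> t0 t00 t0c e e0.
        have [d d0 hd] := yd t0 t00 t0c e e0.
        exists d => // h h0 hd' thc.
        have := hd h _ _ _ thc; rewrite gt_eqF // gtr0_norm // => /(_ isT hd').
        have tph : 0 <= t0 + h by rewrite addr_ge0 // ltW.
        move=> /(_ tph) H.
        rewrite -mulmxBr.
        set Fv := F t0 (seg tau y t0).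
        have -> : y (t0 + h) - y t0 = h *: (h^-1 *: (y (t0 + h) - y t0) - Fv) + h *: Fv.
          by rewrite scalerBr scalerA mulfV ?gt_eqF // scale1r subrK.
        have QF : Q *m (h *: Fv) = 0 by rewrite -scalemxAr hQE scaler0.
        rewrite mulmxDr QF addr0 -scalemxAr mx_normZ gtr0_norm // mulrC.
        apply: ler_wpM2r; first exact: ltW.
        by apply: le_trans (Qn _ _ _ _ _) H.
      pose v := E (Psi x).
      have Fs : forall s, 0 <= s -> (s%:E < cc)%E -> F s (seg tau y s) = v.
        move=> s s0 sc.
        have hL : L (seg tau y s) = x.
          by rewrite -{1}(hLc x) /L /seg clamp0 // addr0 top // y0.
        by rewrite /F hL.
      have gc : forall s1, 0 <= s1 -> (s1%:E < cc)%E -> y s1 - s1 *: v = y 0 - 0 *: v.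
        move=> s1 s10 s1c; apply: (@zero_rderiv R m (fun s => y s - s *: v) cc) => //.
          move=> t0 t00 t0c e e0.
          have e2 : 0 < e / 2 by rewrite divr_gt0.
          have v1 : 0 < `|v| + 1 by rewrite ltr_wpDl.
          have [d d0 hd] := yc t0 (le_trans mt0 t00) t0c (e / 2) e2.
          exists (Num.min d (e / 2 / (`|v| + 1))); first by rewrite lt_min d0 divr_gt0.
          move=> s' s0' sc'; rewrite lt_min => /andP[hs1 hs2].
          have := hd s' (le_trans mt0 s0') sc' hs1.
          rewrite ltr_pdivlMr // in hs2.
          have -> : y s' - s' *: v - (y t0 - t0 *: v) = (y s' - y t0) - (s' - t0) *: v.
            by rewrite swap_sub scalerBl.
          have := ler_normB (y s' - y t0) ((s' - t0) *: v).
          rewrite mx_normZ.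
          have := normr_ge0 v. have := normr_ge0 (s' - t0).
          nra.
        move=> t0 t00 t0c e e0.
        have [d d0 hd] := yd t0 t00 t0c e e0.
        exists d => // h h0 hd' thc.
        have := hd h _ _ _ thc; rewrite gt_eqF // gtr0_norm // => /(_ isT hd').
        have tph : 0 <= t0 + h by rewrite addr_ge0 // ltW.
        move=> /(_ tph); rewrite Fs // => H.
        have -> : y (t0 + h) - (t0 + h) *: v - (y t0 - t0 *: v) = h *: (h^-1 *: (y (t0 + h) - y t0) - v).
          rewrite [RHS]scalerBr [h *: (h^-1 *: _)]scalerA mulfV ?gt_eqF // scale1r swap_sub scalerDl.
          by rewrite [t0 *: v + _]addrC addrK.
        by rewrite mx_normZ gtr0_norm // mulrC; apply: ler_wpM2r; first exact: ltW.
      have := gc t (ltW ht) tc.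
      rewrite scale0r subr0 y0 ?max_r ?ltW // => <-.
      by rewrite subrK.
    * case: hPsi => DP [H1 H2 H3 H4 H5].
      pose Lh := fun (hs : nat -> R -> 'cV[R]_m) (i : nat) => L (hs i).
      have hLlin : forall a (x y : R -> 'cV[R]_m), L (a *: x + y) = a *: L x + L y.
        by move=> a x y; rewrite /L /= mulmxDr -scalemxAr scalerDr !scalerA mulrC.
      have hLD : forall (x y : R -> 'cV[R]_m), L (x + y) = L x + L y.
        by move=> x y; rewrite /L /= mulmxDr scalerDr.
      have hLB : forall (x y : R -> 'cV[R]_m), L x - L y = L (x - y).
        by move=> x y; rewrite /L /= mulmxBr scalerBr.
      have hElin : forall a X1 Y1, E (a *: X1 + Y1) = a *: E X1 + E Y1.
        by move=> a X1 Y1; rewrite /E mulmxDr -scalemxAr scalerDr !scalerA mulrC.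
      have hEB : forall X1 Y1, E X1 - E Y1 = E (X1 - Y1).
        by move=> X1 Y1; rewrite /E mulmxBr scalerBr.
      have Lupd : forall hs i x, Lh (upd hs i x) = upd (Lh hs) i (L x).
        by move=> hs i x; apply: funext => l; rewrite /Lh /upd; case: eqP.
      have Lnc : forall (h : R -> 'cV[R]_m) hs, Lh (Defs.ncons h hs) = Defs.ncons (L h) (Lh hs).
        by move=> h hs; apply: funext => -[|l].
      have Lprod : forall j (hs : nat -> R -> 'cV[R]_m), (forall l, Cspace tau (hs l)) ->
          \prod_(i < j) `|Lh hs i| <= w^-1 ^+ j * \prod_(i < j) normC tau (hs i).
        move=> j hs Shs; apply: (@prod_le R j (fun i => `|Lh hs i|) (fun i => normC tau (hs i))).
        by move=> i _; rewrite normr_ge0 /=; apply: nL; case: (Shs i).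
      have w0 : w != 0 by rewrite gt_eqF.
      exists (fun j t u hs => E (DP j 0 (L u) (Lh hs))); split.
      - by move=> t u hs [_ [_ Xu]]; rewrite H1.
      - move=> j t u jk [_ [_ Xu]]; have [A B] := H2 j 0 (L u) jk Xu; split.
          move=> hs hs' hh; rewrite (A (Lh hs) (Lh hs')) // => i ilt; by rewrite /Lh hh.
        move=> hs i a x y ij Shs Sx Sy.
        by rewrite !Lupd hLlin B // hElin.
      - move=> j t u jk [_ [Cu Xu]] e e0.
        pose e' := e * (T * wt) * w ^+ j.+1.
        have e'0 : 0 < e' by rewrite /e' !mulr_gt0 // exprn_gt0.
        have [d' d0 Hd] := H3 j 0 (L u) jk Xu e' e'0.
        exists (d' * w); first by rewrite mulr_gt0.
        move=> h Ch hd [_ [_ Xuh]] hs Shs.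
        have hLh : `|L h| <= w^-1 * normC tau h by apply: nL; case: Ch.
        have hLh' : `|L h| < d'.
          by apply: (le_lt_trans hLh); rewrite mulrC ltr_pdivrMr.
        rewrite hLD in Xuh; rewrite /= hLD Lnc.
        have := Hd (L h) I hLh' Xuh (Lh hs) (fun=> I) => /= HD.
        rewrite !hEB; apply: (le_trans (nE _)).
        apply: (le_trans (ler_wpM2l (ltW c0) HD)).
        have P1 := Lprod j hs Shs.
        have P2 : `|L h| * \prod_(i < j) `|Lh hs i| <=
            (w^-1 * normC tau h) * (w^-1 ^+ j * \prod_(i < j) normC tau (hs i)).
          apply: ler_pM; [exact: normr_ge0 | apply: prodr_ge0 => i _; exact: normr_ge0 | exact: hLh | exact: P1].
        have key : c * e' * (w^-1 * w^-1 ^+ j) = e.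
          rewrite /e' /c exprS exprVn; field.
          by rewrite (expf_neq0 _ w0) w0 !gt_eqF.
        have H := ler_wpM2l (ltW (mulr_gt0 c0 e'0)) P2.
        have E1 : c * (e' * `|L h| * \prod_(i < j) `|Lh hs i|) = c * e' * (`|L h| * \prod_(i < j) `|Lh hs i|) by ring.
        have E2 : c * e' * ((w^-1 * normC tau h) * (w^-1 ^+ j * \prod_(i < j) normC tau (hs i))) = (c * e' * (w^-1 * w^-1 ^+ j)) * (normC tau h * \prod_(i < j) normC tau (hs i)) by ring.
        by rewrite E1; apply: (le_trans H); rewrite E2 key mulrA.
      - move=> j t u jk [_ [Cu Xu]] e e0.
        pose e' := e * (T * wt) * w ^+ j.
        have e'0 : 0 < e' by rewrite /e' !mulr_gt0 // exprn_gt0.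
        have [d' d0 Hd] := H4 j 0 (L u) jk Xu e' e'0.
        exists (d' * w); first by rewrite mulr_gt0.
        move=> s v [_ [Cv Xv]] hst hvu hs Shs.
        have cvu : continuous (v - u) by move=> r; apply: continuousB; [apply: Cv.1 | apply: Cu.1].
        have hL' : `|L v - L u| < d'.
          rewrite hLB; apply: (le_lt_trans (nL _ cvu)).
          by rewrite mulrC ltr_pdivrMr.
        have := Hd 0 (L v) Xv _ hL' (Lh hs) (fun=> I) => /=.
        rewrite subrr normr0 => /(_ d0) HD.
        rewrite hEB; apply: (le_trans (nE _)).
        apply: (le_trans (ler_wpM2l (ltW c0) HD)).
        have P1 := Lprod j hs Shs.
        have key : c * e' * w^-1 ^+ j = e.
          rewrite /e' /c exprVn; field.
          by rewrite (expf_neq0 _ w0) !gt_eqF.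
        have H := ler_wpM2l (ltW (mulr_gt0 c0 e'0)) P1.
        have E1 : c * (e' * \prod_(i < j) `|Lh hs i|) = c * e' * \prod_(i < j) `|Lh hs i| by ring.
        have E2 : c * e' * (w^-1 ^+ j * \prod_(i < j) normC tau (hs i)) = (c * e' * w^-1 ^+ j) * \prod_(i < j) normC tau (hs i) by ring.
        by rewrite E1; apply: (le_trans H); rewrite E2 key.
      - move=> j /andP[j1 jk]; have [M HM] := H5 j (introT andP (conj j1 jk)).
        exists (c * `|M| * w^-1 ^+ j) => t u hs [_ [_ Xu]] Shs.
        apply: (le_trans (nE _)).
        have := HM 0 (L u) (Lh hs) Xu (fun=> I) => /= hM.
        rewrite -!mulrA; apply: ler_wpM2l; first exact: ltW.
        apply: (le_trans hM); apply: (le_trans (ler_wpM2r _ (ler_norm M))).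
          by apply: prodr_ge0 => i _.
        apply: ler_wpM2l; first exact: normr_ge0.
        exact: Lprod.
- move=> t u v [x Xx ->] [x' Xx' ->].
  rewrite /F !hLc /E -scalerBr -mulmxBr.
  have h1 : KPsi <= K * T * (w * wt) by rewrite -ler_pdivrMr ?mulr_gt0.
  have h2 : c * KPsi <= K * w.
    rewrite /c mulrC ler_pdivrMr ?mulr_gt0 //.
    by have -> : K * w * (T * wt) = K * T * (w * wt) by ring.
  have hN : `|W *m x - W *m x'| <= normC tau (cstC (W *m x + 0) - cstC (W *m x' + 0)).
    have -> : cstC (W *m x + 0) - cstC (W *m x' + 0) = cstC (W *m x + 0 - (W *m x' + 0)).
      by apply: funext.
    have := @normC_ge R tau m (cstC (W *m x + 0 - (W *m x' + 0))) 0 htau0 (@cst_continuous _ _ _).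
    by rewrite !addr0; apply; rewrite lexx andbT lerNl oppr0.
  rewrite -mulmxBr nWx in hN.
  apply: (le_trans (nE _)).
  apply: (le_trans (ler_wpM2l (ltW c0) (hLip _ _ Xx Xx'))).
  rewrite mulrA; apply: (le_trans (ler_wpM2r (normr_ge0 _) h2)).
  by rewrite -mulrA; apply: ler_wpM2l.
- rewrite /opnorm.
  have -> : [set `|W *m x| | x in [set x : 'cV[R]_n | `|x| = 1]] = [set w].
    apply/seteqP; split => [_ [x /= x1 <-] | _ ->]; first by rewrite /= nWx x1 mulr1.
    by exists (const_mx 1); rewrite /= ?nWx norm_one // mulr1.
  by rewrite sup1.
- rewrite /opnorm.
  set S := [set _ | _ in _].
  have ub : ubound S wt.
    move=> _ [y /= y1 <-]; rewrite /Wt -scalemxAl mx_normZ gtr0_norm //.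
    by rewrite -{2}(mulr1 wt) -y1; apply: ler_wpM2l; [exact: ltW | exact: PTn].
  pose y0 := P *m (const_mx 1 : 'cV[R]_q).
  have Wy0 : Wt *m y0 = wt *: const_mx 1.
    by rewrite /Wt /y0 -scalemxAl mulmxA PP // mul1mx.
  have y01 : `|y0| = 1.
    apply/le_anti/andP; split; first by rewrite -(@norm_one R q hq); apply: Pn.
    by rewrite -(@norm_one R q hq) -(mul1mx (const_mx 1)) -(@PP R n q m hm) -mulmxA PTn.
  have Sy0 : S wt by exists y0; rewrite // Wy0 mx_normZ (@norm_one R q hq) // gtr0_norm // mulr1.
  apply/le_anti/andP; split; first by apply: ge_sup => //; exists wt.
  by apply: sup_upper_bound => //; split; [exists wt | exists wt].
Qed.
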